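(* Let $(V,g)$ be a Euclidean vector space and $\mathfrak{g}\subseteq\mathfrak{so}(V)$ a nonzero Lie subalgebra. If there is a nonzero spinor $x$ with $\mathfrak{g}x=0$ (for the spin representation of $\mathfrak{spin}(V)\cong\mathfrak{so}(V)$), then $T^{\mathfrak{g}}\neq0$.
   Context: $\Lambda^2V$ is identified with $\mathfrak{so}(V)$ via the metric, with the standard inner product on forms. $T^{\mathfrak{g}}=\sum_kx_k\wedge x_k\in\Lambda^4V$ for an orthonormal basis $\{x_k\}$ of $\mathfrak{g}\subseteq\Lambda^2V$ (the characteristic form of $(\mathfrak{g},V)$). *)

(* Defs.v *)
From HB Require Import structures.
From mathcomp Require Import all_boot all_order all_algebra.
Set Implicit Arguments. Unset Strict Implicit. Unset Printing Implicit Defensive.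
Import Order.TTheory GRing.Theory Num.Theory.
Local Open Scope ring_scope.

(* Conventions: C is an algebraically closed numeric field (e.g. the complex
   numbers); the real scalars are its real elements.  V = standard Euclidean
   space of dimension n (real coordinates, standard metric).  so(V) = real
   skew-symmetric n x n matrices, identified with Lambda^2 V by
   e_i /\ e_j  <->  E_ij - E_ji, i.e. a 2-form is given by its skew component
   matrix A (A i j = coefficient of e_i /\ e_j for i < j). *)

Section Defs.
Variable C : numClosedFieldType.
Variable n : nat.

Definition real_mx (A : 'M[C]_n) : Prop := forall i j, A i j \is Num.real.
Definition skew_mx (A : 'M[C]_n) : Prop := A^T = - A.
Definition so_elt (A : 'M[C]_n) : Prop := real_mx A /\ skew_mx A.

Definition lie_bracket (A B : 'M[C]_n) : 'M[C]_n := A *m B - B *m A.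

Definition is_lie_subalgebra (g : 'M[C]_n -> Prop) : Prop :=
  [/\ (forall A, g A -> so_elt A), g 0,
      (forall (a : C) A B, a \is Num.real -> g A -> g B -> g (a *: A + B))
    & (forall A B, g A -> g B -> g (lie_bracket A B))].

Definition nonzero_sub (g : 'M[C]_n -> Prop) : Prop := exists A, g A /\ A != 0.

(* standard inner product of 2-forms: e_i /\ e_j (i<j) orthonormal *)
Definition form_dot (A B : 'M[C]_n) : C :=
  \sum_(i < n) \sum_(j < n | (i < j)%N) A i j * B i j.

Definition is_orthonormal_basis (g : 'M[C]_n -> Prop) (m : nat)
    (x : 'I_m -> 'M[C]_n) : Prop :=
  [/\ (forall k, g (x k)),
      (forall k l, form_dot (x k) (x l) = (k == l)%:R)
    & (forall A, g A -> exists c : 'I_m -> C,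
          (forall k, c k \is Num.real) /\ A = \sum_(k < m) c k *: x k)].

(* components of the 4-form A /\ B for 2-forms A, B (as skew matrices):
   (A /\ B) = sum_{i<j<k<l} (wedge22 A B i j k l) e_i/\e_j/\e_k/\e_l,
   extended to all index quadruples as the totally antisymmetric function *)
Definition wedge22 (A B : 'M[C]_n) (i j k l : 'I_n) : C :=
  A i j * B k l - A i k * B j l + A i l * B j k
  + A j k * B i l - A j l * B i k + A k l * B i j.

Definition char_form (m : nat) (x : 'I_m -> 'M[C]_n) (i j k l : 'I_n) : C :=
  \sum_(q < m) wedge22 (x q) (x q) i j k l.

Definition spin_dim : nat := 2 ^ n./2.

Definition clifford_rep (gam : 'I_n -> 'M[C]_spin_dim) : Prop :=
  forall i j, gam i *m gam j + gam j *m gam i = (- 2 * (i == j)%:R)%:M.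

Definition spin_act (gam : 'I_n -> 'M[C]_spin_dim) (A : 'M[C]_n)
  : 'M[C]_spin_dim :=
  \sum_(i < n) \sum_(j < n) (A i j / 4%:R) *: (gam i *m gam j).

End Defs.

(* Main.v *)
Require Import Defs.
From HB Require Import structures.
From mathcomp Require Import all_boot all_order all_algebra.
Import Order.TTheory GRing.Theory Num.Theory.
Set Implicit Arguments. Unset Strict Implicit. Unset Printing Implicit Defensive.
Local Open Scope ring_scope.

Definition sum4 (V : zmodType) n (F : 'I_n -> 'I_n -> 'I_n -> 'I_n -> V) : V :=
  \sum_(i < n) \sum_(j < n) \sum_(k < n) \sum_(l < n) F i j k l.

Lemma sum4D (V : zmodType) n (F G : 'I_n -> 'I_n -> 'I_n -> 'I_n -> V) :
  sum4 (fun i j k l => F i j k l + G i j k l) = sum4 F + sum4 G.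
Proof.
rewrite /sum4 -big_split; apply: eq_bigr => i _; rewrite -big_split.
apply: eq_bigr => j _; rewrite -big_split; apply: eq_bigr => k _.
by rewrite -big_split.
Qed.

Lemma sum4N (V : zmodType) n (F : 'I_n -> 'I_n -> 'I_n -> 'I_n -> V) :
  sum4 (fun i j k l => - F i j k l) = - sum4 F.
Proof.
rewrite /sum4 -sumrN; apply: eq_bigr => i _; rewrite -sumrN.
apply: eq_bigr => j _; rewrite -sumrN; apply: eq_bigr => k _.
by rewrite -sumrN.
Qed.

Lemma sum4_ext (V : zmodType) n (F G : 'I_n -> 'I_n -> 'I_n -> 'I_n -> V) :
  (forall i j k l, F i j k l = G i j k l) -> sum4 F = sum4 G.
Proof.
move=> h; rewrite /sum4; apply: eq_bigr => i _; apply: eq_bigr => j _.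
apply: eq_bigr => k _; apply: eq_bigr => l _; exact: h.
Qed.

Lemma sum_delta (R : pzRingType) (V : lmodType R) n (j : 'I_n) (F : 'I_n -> V) :
  \sum_(k < n) ((j == k)%:R *: F k) = F j.
Proof.
rewrite (bigD1 j) //= eqxx scale1r big1 ?addr0 // => k.
by rewrite eq_sym => /negbTE ->; rewrite scale0r.
Qed.

Lemma commZ (R : comPzRingType) (V : lmodType R) (a b : R) (v : V) :
  a *: (b *: v) = b *: (a *: v).
Proof. by rewrite !scalerA mulrC. Qed.
Lemma swapg (C : fieldType) n d (gam : 'I_n -> 'M[C]_d)
  (hc : forall i j, gam i *m gam j + gam j *m gam i = (- 2 * (i == j)%:R)%:M) j k :
  gam k *m gam j = - (gam j *m gam k) + ((j == k)%:R *: (-2)%:M).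
Proof.
rewrite -[gam k *m gam j](addKr (gam j *m gam k)) hc; congr (_ + _).
by rewrite scale_scalar_mx mulrC.
Qed.

Lemma T1 (C : fieldType) n d (gam : 'I_n -> 'M[C]_d)
  (hc : forall i j, gam i *m gam j + gam j *m gam i = (- 2 * (i == j)%:R)%:M) i j k l :
  gam i *m gam k *m gam j *m gam l =
  - (gam i *m gam j *m gam k *m gam l) + (j == k)%:R *: ((-2) *: (gam i *m gam l)).
Proof.
rewrite -(mulmxA (gam i)) swapg // mulmxDr mulmxDl mulmxN mulNmx !mulmxA.
by rewrite -scalemxAr -scalemxAl mul_mx_scalar -scalemxAl.
Qed.

Lemma T2 (C : fieldType) n d (gam : 'I_n -> 'M[C]_d)
  (hc : forall i j, gam i *m gam j + gam j *m gam i = (- 2 * (i == j)%:R)%:M) i j k l :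
  gam i *m gam k *m gam l *m gam j =
  gam i *m gam j *m gam k *m gam l - (j == k)%:R *: ((-2) *: (gam i *m gam l))
   + (j == l)%:R *: ((-2) *: (gam i *m gam k)).
Proof.
rewrite -(mulmxA _ (gam l)) (swapg hc j l) mulmxDr mulmxN !mulmxA.
rewrite (T1 hc i j k l) opprD opprK.
by rewrite -scalemxAr mul_mx_scalar.
Qed.

Lemma A2 (C : fieldType) n d (gam : 'I_n -> 'M[C]_d)
  (hc : forall i j, gam i *m gam j + gam j *m gam i = (- 2 * (i == j)%:R)%:M)
  (f : 'I_n -> 'I_n -> 'I_n -> 'I_n -> C) :
  sum4 (fun i j k l => f i k j l *: (gam i *m gam j *m gam k *m gam l)) =
  - sum4 (fun i j k l => f i j k l *: (gam i *m gam j *m gam k *m gam l))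
  + (-2) *: (\sum_(i < n) \sum_(j < n) \sum_(l < n) f i j j l *: (gam i *m gam l)).
Proof.
have -> : sum4 (fun i j k l => f i k j l *: (gam i *m gam j *m gam k *m gam l)) =
  sum4 (fun i j k l => f i j k l *: (gam i *m gam k *m gam j *m gam l)).
  by rewrite /sum4; apply: eq_bigr => i _; exact: exchange_big.
rewrite (@sum4_ext _ _ _ (fun i j k l => - (f i j k l *: (gam i *m gam j *m gam k *m gam l))
   + (j == k)%:R *: (f i j k l *: (-2 *: (gam i *m gam l))))); last first.
  by move=> i j k l; rewrite (T1 hc i j k l) scalerDr scalerN commZ.
rewrite sum4D sum4N; congr (_ + _).
rewrite /sum4 scaler_sumr; apply: eq_bigr => i _; rewrite scaler_sumr.
apply: eq_bigr => j _.
under eq_bigr do rewrite -scaler_sumr.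
rewrite sum_delta scaler_sumr; apply: eq_bigr => l _; by rewrite commZ.
Qed.

Lemma Dlem (C : fieldType) n d (gam : 'I_n -> 'M[C]_d)
  (f : 'I_n -> 'I_n -> 'I_n -> 'I_n -> C) :
  sum4 (fun i j k l => (j == k)%:R *: (f i j k l *: (-2 *: (gam i *m gam l)))) =
  (-2) *: (\sum_(i < n) \sum_(j < n) \sum_(l < n) f i j j l *: (gam i *m gam l)).
Proof.
rewrite /sum4 scaler_sumr; apply: eq_bigr => i _; rewrite scaler_sumr.
apply: eq_bigr => j _.
under eq_bigr do rewrite -scaler_sumr.
rewrite sum_delta scaler_sumr; apply: eq_bigr => l _; by rewrite commZ.
Qed.

Lemma A3 (C : fieldType) n d (gam : 'I_n -> 'M[C]_d)
  (hc : forall i j, gam i *m gam j + gam j *m gam i = (- 2 * (i == j)%:R)%:M)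
  (f : 'I_n -> 'I_n -> 'I_n -> 'I_n -> C) :
  sum4 (fun i j k l => f i l j k *: (gam i *m gam j *m gam k *m gam l)) =
  sum4 (fun i j k l => f i j k l *: (gam i *m gam j *m gam k *m gam l))
  - (-2) *: (\sum_(i < n) \sum_(j < n) \sum_(l < n) f i j j l *: (gam i *m gam l))
  + (-2) *: (\sum_(i < n) \sum_(j < n) \sum_(k < n) f i j k j *: (gam i *m gam k)).
Proof.
have -> : sum4 (fun i j k l => f i l j k *: (gam i *m gam j *m gam k *m gam l)) =
  sum4 (fun i j k l => f i j k l *: (gam i *m gam k *m gam l *m gam j)).
  rewrite /sum4; apply: eq_bigr => i _.
  under eq_bigr do rewrite exchange_big.
  by rewrite exchange_big.
rewrite (@sum4_ext _ _ _ (fun i j k l => (f i j k l *: (gam i *m gam j *m gam k *m gam l)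
   + - ((j == k)%:R *: (f i j k l *: (-2 *: (gam i *m gam l)))))
   + (j == l)%:R *: (f i j k l *: (-2 *: (gam i *m gam k))))); last first.
  by move=> i j k l; rewrite (T2 hc i j k l) !scalerDr scalerN !(commZ (f _ _ _ _)).
rewrite !sum4D sum4N Dlem; congr (_ + _).
rewrite /sum4 scaler_sumr; apply: eq_bigr => i _; rewrite scaler_sumr.
apply: eq_bigr => j _; rewrite scaler_sumr; apply: eq_bigr => k _.
by rewrite sum_delta commZ.
Qed.

Lemma Dsym (C : fieldType) n d (gam : 'I_n -> 'M[C]_d)
  (hc : forall i j, gam i *m gam j + gam j *m gam i = (- 2 * (i == j)%:R)%:M)
  (M : 'I_n -> 'I_n -> C) (hM : forall i l, M l i = M i l) :
  (\sum_(i < n) \sum_(l < n) M i l *: (gam i *m gam l)) *+ 2 =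
  (\sum_(i < n) M i i) *: (-2)%:M.
Proof.
rewrite mulr2n [X in _ + X]exchange_big /=.
rewrite -big_split /= scaler_suml; apply: eq_bigr => i _.
rewrite -big_split /=.
under eq_bigr => l _ do rewrite (hM i l) -scalerDr hc mulrC -scale_scalar_mx commZ.
by rewrite sum_delta.
Qed.

Lemma sym2 (V : zmodType) n (f : 'I_n -> 'I_n -> V)
  (hs : forall i j, f j i = f i j) (h0 : forall i, f i i = 0) :
  \sum_(i < n) \sum_(j < n) f i j = (\sum_(i < n) \sum_(j < n | (i < j)%N) f i j) *+ 2.
Proof.
have e1 : forall i : 'I_n, \sum_(j < n) f i j =
   \sum_(j < n | (i < j)%N) f i j + \sum_(j < n | (j < i)%N) f i j.
  move=> i; rewrite (bigID (fun j : 'I_n => (i < j)%N)) /=; congr (_ + _).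
  rewrite (bigID (fun j : 'I_n => (j < i)%N)) /= [X in _ + X]big1 ?addr0.
    apply: eq_bigl => j; case: ltngtP => //.
  move=> j /andP[h1 h2]; have -> : j = i.
    by apply: val_inj; apply/eqP; rewrite eqn_leq leqNgt h1 leqNgt h2.
  exact: h0.
rewrite (eq_bigr _ (fun i _ => e1 i)) big_split /= mulr2n; congr (_ + _).
rewrite (exchange_big_dep xpredT) //=; apply: eq_bigr => i _.
by apply: eq_bigr => j _; rewrite hs.
Qed.

Lemma expand (C : fieldType) n d (gam : 'I_n -> 'M[C]_d) m (x : 'I_m -> 'M[C]_n) :
  sum4 (fun i j k l => (\sum_(q < m) x q i j * x q k l) *: (gam i *m gam j *m gam k *m gam l))
  = \sum_(q < m) (\sum_(i < n) \sum_(j < n) x q i j *: (gam i *m gam j)) *m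
                 (\sum_(k < n) \sum_(l < n) x q k l *: (gam k *m gam l)).
Proof.
transitivity (\sum_(q < m) \sum_(i < n) \sum_(j < n) \sum_(k < n) \sum_(l < n)
   (x q i j * x q k l) *: (gam i *m gam j *m gam k *m gam l)).
  symmetry; rewrite exchange_big; apply: eq_bigr => i _.
  rewrite exchange_big; apply: eq_bigr => j _.
  rewrite exchange_big; apply: eq_bigr => k _.
  rewrite exchange_big; apply: eq_bigr => l _.
  by rewrite scaler_suml.
apply: eq_bigr => q _; rewrite mulmx_suml; apply: eq_bigr => i _.
rewrite mulmx_suml; apply: eq_bigr => j _.
rewrite -scalemxAl mulmx_sumr scaler_sumr; apply: eq_bigr => k _.
rewrite mulmx_sumr scaler_sumr; apply: eq_bigr => l _.
by rewrite -scalemxAr scalerA !mulmxA.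
Qed.

Lemma wedge_self (C : numClosedFieldType) n (A : 'M[C]_n) i j k l :
  wedge22 A A i j k l = (A i j * A k l - A i k * A j l + A i l * A j k) *+ 2.
Proof.
rewrite /wedge22 (mulrC (A j k)) (mulrC (A j l)) (mulrC (A k l)).
move: (A i j * A k l) (A i k * A j l) (A i l * A j k) => a b c.
rewrite mulr2n; set X := a - b + c.
rewrite -[X + c - b + a]addrA -addrA; congr (_ + _).
by rewrite [- b + a]addrC addrC.
Qed.

Lemma tr_skew (C : numClosedFieldType) n (A : 'M[C]_n) (hA : A^T = - A) :
  \sum_(i < n) \sum_(j < n) A i j * A j i = - (form_dot A A *+ 2).
Proof.
have sk : forall i j, A j i = - A i j.
  by move=> i j; have := congr1 (fun M : 'M[C]_n => M i j) hA; rewrite !mxE.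
rewrite /form_dot -sym2.
- rewrite -sumrN; apply: eq_bigr => i _; rewrite -sumrN; apply: eq_bigr => j _.
  by rewrite (sk i j) mulrN.
- by move=> i j; rewrite (sk i j) mulrNN.
move=> i; have h := sk i i; have : A i i *+ 2 == 0.
  by rewrite mulr2n {1}h addNr.
by rewrite mulrn_eq0 /= => /eqP ->; rewrite mulr0.
Qed.

Theorem proposition7p1 (C : numClosedFieldType) (n : nat)
  (g : 'M[C]_n -> Prop) (m : nat) (x : 'I_m -> 'M[C]_n) :
  is_lie_subalgebra g ->
  nonzero_sub g ->
  is_orthonormal_basis g x ->
  (exists gam : 'I_n -> 'M[C]_(spin_dim n),
     clifford_rep gam /\
     exists s : 'cV[C]_(spin_dim n),
       s != 0 /\ (forall A, g A -> spin_act gam A *m s = 0)) ->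
  ~ (forall i j k l : 'I_n, char_form x i j k l = 0).
Proof.
move=> [hso _ _ _] [A [gA A0]] [xg xon xspan] [gam [hc [s [s0 hs]]]] H.
have m0 : (0 < m)%N.
  case: (posnP m) => // em; have [c [_ eA]] := xspan A gA.
  move: A0; rewrite eA big1 ?eqxx // => k _.
  by have := ltn_ord k; rewrite {2}em.
have skA : forall q, (x q)^T = - x q by move=> q; have [_ ->] := hso _ (xg q).
have sk : forall q i j, x q j i = - x q i j.
  by move=> q i j; have := congr1 (fun M : 'M[C]_n => M i j) (skA q); rewrite !mxE.
rewrite /clifford_rep in hc.
pose P i j k l := \sum_(q < m) x q i j * x q k l.
have HP : forall i j k l, P i j k l = P i k j l - P i l j k.
  move=> i j k l; have := H i j k l; rewrite /char_form.
  under eq_bigr do rewrite wedge_self.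
  rewrite sumrMnl -mulr_natr => /eqP; rewrite mulf_eq0 pnatr_eq0 orbF.
  rewrite !big_split /= !sumrN -/(P i j k l) -/(P i k j l) -/(P i l j k).
  by rewrite addrAC subr_eq0 => /eqP <-; rewrite addrK.
pose E i j k l := gam i *m gam j *m gam k *m gam l.
pose S := sum4 (fun i j k l => P i j k l *: E i j k l).
pose Dn := \sum_(i < n) \sum_(j < n) \sum_(l < n) P i j j l *: (gam i *m gam l).
have hD1 : \sum_(i < n) \sum_(j < n) \sum_(k < n) P i j k j *: (gam i *m gam k) = - Dn.
  rewrite /Dn -sumrN; apply: eq_bigr => i _; rewrite -sumrN; apply: eq_bigr => j _.
  rewrite -sumrN; apply: eq_bigr => k _; rewrite -scaleNr; congr (_ *: _).
  by rewrite /P -sumrN; apply: eq_bigr => q _; rewrite (sk q j k) mulrN.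
have hS : S = (- S + (-2) *: Dn) - (S - (-2) *: Dn + (-2) *: (- Dn)).
  rewrite {1}/S (@sum4_ext _ _ _ (fun i j k l => P i k j l *: E i j k l
       + - (P i l j k *: E i j k l))); last first.
    by move=> i j k l; rewrite HP scalerBl.
  by rewrite sum4D sum4N /E (A2 hc P) (A3 hc P) hD1.
have Sv : S *m s = 0.
  rewrite /S /E expand mulmx_suml big1 // => q _; rewrite -mulmxA.
  have -> : \sum_(k < n) \sum_(l < n) x q k l *: (gam k *m gam l) =
     4%:R *: spin_act gam (x q).
    rewrite /spin_act scaler_sumr; apply: eq_bigr => i _.
    rewrite scaler_sumr; apply: eq_bigr => j _.
    by rewrite scalerA mulrC divfK // pnatr_eq0.
  by rewrite -(scalemxAl _ (spin_act gam (x q)) s) hs // scaler0 mulmx0.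
have v0 : Dn *m s = 0.
  have := congr1 (mulmxr s) hS; rewrite !linearD !linearN !linearZ /= Sv.
  rewrite !oppr0 !add0r !opprK -!scalerDl => /eqP; rewrite eq_sym scaler_eq0 => /orP[|/eqP//].
  by rewrite -!opprD oppr_eq0 -!natrD pnatr_eq0.
pose M i l := \sum_(j < n) P i j j l.
have eD : Dn = \sum_(i < n) \sum_(l < n) M i l *: (gam i *m gam l).
  rewrite /Dn; apply: eq_bigr => i _; rewrite exchange_big; apply: eq_bigr => l _.
  by rewrite scaler_suml.
have hM : forall i l, M l i = M i l.
  move=> i l; rewrite /M; apply: eq_bigr => j _; rewrite /P; apply: eq_bigr => q _.
  by rewrite (sk q j l) (sk q i j) mulrNN mulrC.
have hT : \sum_(i < n) M i i = - (1 *+ 2 *+ m).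
  rewrite /M /P.
  under eq_bigr do rewrite exchange_big.
  rewrite exchange_big /=.
  under eq_bigr => q _ do rewrite (tr_skew (skA q)) xon eqxx.
  by rewrite sumrN sumr_const card_ord.
have := Dsym hc hM; rewrite -eD => /(congr1 (mulmxr s)).
rewrite linearMn /= v0 mul0rn -scalemxAl mul_scalar_mx hT => /eqP.
rewrite eq_sym scaler_eq0 scaler_eq0 (negbTE s0) orbF => /orP[].
  by rewrite oppr_eq0 -mulrnA pnatr_eq0 muln_eq0 /= eqn0Ngt m0.
by rewrite oppr_eq0 pnatr_eq0.
Qed.
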